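(* Let $\mathcal D$ be a dyadic grid in $\mathbf R^d$, let $\mathcal S\subseteq\mathcal D$ be a sparse collection, and let $\alpha_1,\ldots,\alpha_m\in[0,1)$ with $\sum_{j=1}^m\alpha_j<1$. Then \[ \sum_{\substack{Q'\in\mathcal S\\ Q'\subseteq Q}}\Big(\prod_{j=1}^m\langle g_j\rangle_{1,Q'}^{\alpha_j}\Big)|Q'|\lesssim\Big(\prod_{j=1}^m\langle g_j\rangle_{1,Q}^{\alpha_j}\Big)|Q| \] for all $g_1,\ldots,g_m\in L^1_{\mathrm{loc}}(\mathbf R^d)$ and all $Q\in\mathcal D$, with implicit constant depending only on $d$, $m$ and $\alpha_1,\dots,\alpha_m$.
   Context: A dyadic grid is $\mathcal D^\alpha=\{2^{-j}([0,1)^d+\alpha+k):j\in\mathbf Z,k\in\mathbf Z^d\}$ for some $\alpha\in\{0,\frac13,\frac23\}^d$. A collection $\mathcal S$ of cubes is sparse if each $Q\in\mathcal S$ has $E_Q\subseteq Q$ with $|E_Q|\ge\frac12|Q|$ and $\{E_Q\}_{Q\in\mathcal S}$ pairwise disjoint. $\langle g\rangle_{1,Q}:=\frac1{|Q|}\int_Q|g|$. *)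

(* Defs.v *)
From HB Require Import structures.
From mathcomp Require Import all_boot all_order all_algebra.
From mathcomp Require Import all_classical all_reals all_analysis.
Import Order.TTheory GRing.Theory Num.Theory.
Local Open Scope classical_set_scope.
Local Open Scope ring_scope.

Section ProdSigmaFinite.
Local Open Scope ereal_scope.
Context d1 d2 (T1 : measurableType d1) (T2 : measurableType d2) (R : realType).
Variable m1 : {sigma_finite_measure set T1 -> \bar R}.
Variable m2 : {sigma_finite_measure set T2 -> \bar R}.

Lemma prodsf_sigma_finite : sigma_finite setT (m1 \x m2).
Proof.
have /sigma_finiteP[F [TF ndF Foo]] := sigma_finiteT m1.
have /sigma_finiteP[G [TG ndG Goo]] := sigma_finiteT m2.
exists (fun n => F n `*` G n).
 rewrite -setXTT TF TG predeqE => -[x y]; split.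
    move=> [/= [n _ Fnx] [k _ Gky]]; exists (maxn n k) => //; split.
    - by move: x Fnx; exact/subsetPset/ndF/leq_maxl.
    - by move: y Gky; exact/subsetPset/ndG/leq_maxr.
  by move=> [n _ []/= ? ?]; split; exists n.
move=> k; have [? ?] := Foo k; have [? ?] := Goo k.
split; first exact: measurableX.
by rewrite product_measure1E// lte_mul_pinfty// ge0_fin_numE.
Qed.

Definition prodsf : {sigma_finite_measure set (T1 * T2)%type -> \bar R} :=
  HB.pack (m1 \x m2)%E
    (Measure_isSigmaFinite.Build _ _ _ (m1 \x m2)%E prodsf_sigma_finite).
End ProdSigmaFinite.

(* Rsp R n is R^(n+1) = R * (R * ( ... * R)) with the product sigma-algebra
   of Borel sigma-algebras *)
Fixpoint Rsp (R : realType) (n : nat) : {dsp : measure_display & measurableType dsp} :=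
  match n with
  | 0 => existT _ _ (measurableTypeR R : measurableType _)
  | n.+1 => existT _ _ ((measurableTypeR R * projT2 (Rsp R n))%type : measurableType _)
  end.

Fixpoint lebn (R : realType) (n : nat) :
   {sigma_finite_measure set (projT2 (Rsp R n)) -> \bar R} :=
  match n return {sigma_finite_measure set (projT2 (Rsp R n)) -> \bar R} with
  | 0 => @lebesgue_measure R
  | n.+1 => @prodsf _ _ _ _ R (@lebesgue_measure R) (lebn R n)
  end.

Fixpoint box (R : realType) (n : nat) (a : nat -> R) (l : R) : set (projT2 (Rsp R n)) :=
  match n return set (projT2 (Rsp R n)) with
  | 0 => [set x : R | a 0%N <= x < a 0%N + l]
  | n.+1 => [set x : R | a 0%N <= x < a 0%N + l] `*` @box R n (fun i => a i.+1) l
  end.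
Arguments box {R} n a l.

Definition Rd (R : realType) (d : nat) := projT2 (Rsp R d.-1).
Definition leb (R : realType) (d : nat) : {sigma_finite_measure set (Rd R d) -> \bar R} :=
  lebn R d.-1.

Definition admissible_shift {R : realType} (d : nat) (shift : nat -> R) : Prop :=
  forall i, (i < d)%N -> shift i = 0 \/ shift i = 3^-1 \/ shift i = 2 / 3.

Definition dcube {R : realType} (d : nat) (shift : nat -> R) (j : int) (k : nat -> int)
  : set (Rd R d) :=
  box d.-1 (fun i => (2 : R) ^ (- j) * (shift i + (k i)%:~R)) ((2 : R) ^ (- j)).

Definition dyadic_grid {R : realType} (d : nat) (shift : nat -> R) : set (set (Rd R d)) :=
  [set Q | exists (j : int) (k : nat -> int), Q = dcube d shift j k].

Definition sparse {R : realType} (d : nat) (S : set (set (Rd R d))) : Prop :=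
  exists E : set (Rd R d) -> set (Rd R d),
    (forall Q, S Q ->
       [/\ measurable (E Q), E Q `<=` Q & ((2 : R)^-1)%:E * leb R d Q <= leb R d (E Q)]%E)
    /\ (forall Q Q', S Q -> S Q' -> Q <> Q' -> E Q `&` E Q' = set0).

Definition avg1 {R : realType} (d : nat) (g : Rd R d -> R) (Q : set (Rd R d)) : R :=
  fine (\int[leb R d]_(x in Q) (`|g x|)%:E)%E / fine (leb R d Q).

(* g in L^1_loc(R^d): (Borel) measurable and integrable on every bounded box
   [-r, r)^d *)
Definition loc_integrable {R : realType} (d : nat) (g : Rd R d -> R) : Prop :=
  measurable_fun setT g /\
  forall r : R, 0 < r -> (leb R d).-integrable (box d.-1 (fun=> - r) (2 * r)) (EFin \o g).

(* Main.v *)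
Require Import Defs.
From HB Require Import structures.
From mathcomp Require Import all_boot all_order all_algebra.
From mathcomp Require Import all_classical all_reals all_analysis.
From mathcomp Require Import lra ring measurable_realfun zify.
From Stdlib Require Import Lia.
Import Order.TTheory GRing.Theory Num.Theory.
Local Open Scope classical_set_scope.
Local Open Scope ring_scope.

Section S.
Variable R : realType.

Lemma itv_co (a l : R) : [set x : R | a <= x < a + l] = [set` `[a, a + l[%R].
Proof. by apply/seteqP; split => x /=; rewrite in_itv. Qed.

Lemma itv_meas (a l : R) : 0 <= l -> lebesgue_measure [set x : R | a <= x < a + l] = l%:E.
Proof.
move=> l0; rewrite itv_co lebesgue_measure_itv /= lte_fin.
case: ltP => h; first by rewrite -EFinB addrAC subrr add0r.
by have -> : l = 0 by lra. 
Qed.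

Lemma box_measurable n (a : nat -> R) l : measurable (box n a l).
Proof.
elim: n a => [|n IH] a /=; first by rewrite itv_co; exact: measurable_itv.
apply: measurableX; last exact: IH.
rewrite itv_co; exact: measurable_itv.
Qed.

Lemma box_measure n (a : nat -> R) l : 0 <= l -> lebn R n (box n a l) = (l ^+ n.+1)%:E.
Proof.
move=> l0; elim: n a => [|n IH] a /=.
  by rewrite itv_meas // expr1.
rewrite product_measure1E; last 2 first.
- rewrite itv_co; exact: measurable_itv.
- exact: box_measurable.
by rewrite IH -[X in (X * _)%E]/(lebesgue_measure _) itv_meas // -EFinM exprS.
Qed.

Lemma box_pt n (a : nat -> R) l : 0 < l -> exists x, box n a l x.
Proof.
move=> l0; elim: n a => [|n IH] a /=; first by exists (a 0%N); rewrite /= lexx /=; lra.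
have [x hx] := IH (fun i => a i.+1).
by exists (a 0%N, x); split => //=; rewrite lexx /=; lra.
Qed.

Lemma itv3 (a b l t x y : R) : 0 <= t <= l -> a <= x < a + l -> b <= x < b + t ->
  b <= y < b + t -> a - l <= y < a - l + 3 * l.
Proof. move=> /andP[? ?] /andP[? ?] /andP[? ?] /andP[? ?]; apply/andP; split; lra. Qed.

Lemma box_sub3 n (a b : nat -> R) l t : 0 <= t <= l ->
  box n a l `&` box n b t !=set0 -> box n b t `<=` box n (fun i => a i - l) (3 * l).
Proof.
move=> tl; elim: n a b => [|n IH] a b /=.
  by move=> [x [hx1 hx2]] y hy; apply: itv3 tl hx1 hx2 hy.
move=> [[x1 x2] [[/= h1 h2] [/= h3 h4]]] [y1 y2] [/= h5 h6]; split => /=.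
  exact: itv3 tl h1 h3 h5.
by apply: (IH (fun i => a i.+1) (fun i => b i.+1)) => //; exists x2.
Qed.

Lemma box_sub n (a b : nat -> R) l t :
  (forall i, (i <= n)%N -> b i <= a i /\ a i + l <= b i + t) ->
  box n a l `<=` box n b t.
Proof.
elim: n a b => [|n IH] a b /= h.
  move=> x /andP[? ?]; have [? ?] := h 0%N isT; apply/andP; split; lra.
move=> [x1 x2] [/= /andP[? ?] hx2]; split => /=.
  have [? ?] := h 0%N isT; apply/andP; split; lra.
by apply: (IH (fun i => a i.+1) (fun i => b i.+1)) => // i hi; apply: h.
Qed.

End S.
Section Real.
Variable R : realType.

Lemma pow2_bound (x : R) : exists N, x <= 2 ^+ N.
Proof.
case: (leP x 0) => [x0|x0]; first by exists 0%N; rewrite expr0; lra.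
exists (Num.Def.archi_bound x); apply: le_trans (ltW (archi_boundP (ltW x0))) _.
rewrite -natrX ler_nat; apply: ltnW; exact: ltn_expl.
Qed.

Lemma le_sum_seq (T : eqType) (s : seq T) (F : T -> R) x :
  (forall y, 0 <= F y) -> x \in s -> F x <= \sum_(y <- s) F y.
Proof.
move=> F0; elim: s => // y s IH; rewrite inE big_cons => /orP[/eqP ->|xs].
  by rewrite lerDl; apply: sumr_ge0 => i _.
by apply: le_trans (IH xs) _; rewrite lerDr.
Qed.

Lemma pw (a r : R) N : 0 < a -> 0 <= r -> r <= 2 ^+ N ->
  r `^ a <= 1 + \sum_(k < N) (2 `^ a) ^+ k.+1 * ((2 ^+ k < r)%R)%:R.
Proof.
move=> a0 r0; elim: N => [|N IH] h.
  rewrite big_ord0 addr0; rewrite expr0 in h.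
  have := ge0_ler_powR (ltW a0) (x := r) (y := 1); rewrite powR1; apply => //.
  by rewrite nnegrE.
rewrite big_ord_recr /=.
have q0 : 0 <= 2 `^ a by apply: powR_ge0.
case: (leP r (2 ^+ N)) => h2.
  apply: le_trans (IH h2) _; rewrite addrA lerDl.
  by apply: mulr_ge0; [exact: exprn_ge0 | exact: ler0n].
rewrite (_ : true%:R = 1 :> R) // mulr1.
have -> : (2 `^ a) ^+ N.+1 = (2 ^+ N.+1) `^ a.
  by rewrite -powR_mulrn // -powRrM mulrC powRrM powR_mulrn // powR_ge0.
apply: le_trans (ge0_ler_powR (ltW a0) _ _ h) _; rewrite ?nnegrE //.
rewrite addrA lerDr; apply: addr_ge0 => //; apply: sumr_ge0 => k _.
by apply: mulr_ge0; [exact: exprn_ge0 | exact: ler0n].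
Qed.

Lemma geo (x : R) N : 0 <= x < 1 -> \sum_(k < N) x ^+ k <= (1 - x)^-1.
Proof.
move=> /andP[x0 x1].
have e : \sum_(k < N) x ^+ k * (1 - x) = 1 - x ^+ N.
  elim: N => [|N IH]; first by rewrite big_ord0 expr0 subrr.
  by rewrite big_ord_recr /= IH exprS; ring.
rewrite -[(1 - x)^-1]mul1r ler_pdivlMr; last by lra.
rewrite big_distrl /= e; have := exprn_ge0 N x0; lra.
Qed.
End Real.

Definition Kc (R : realType) (n : nat) (a : R) : R :=
  2 + 2 * 3 ^+ n.+1 * (2 `^ a) * (1 - 2 `^ a / 2)^-1.
Arguments Kc {R} n a.

Lemma q_lt2 {R : realType} (a : R) : a < 1 -> 2 `^ a < 2.
Proof.
move=> a1; rewrite /powR ifF; last by apply/negbTE; rewrite pnatr_eq0.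
have h2 : expR (ln (2:R)) = 2 by rewrite lnK // posrE.
rewrite -{2}h2 ltr_expR; have : 0 < ln (2:R) by apply: ln_gt0; lra.
nra.
Qed.

Lemma Kc_ge2 (R : realType) (n : nat) (a : R) : a < 1 -> 2 <= Kc n a.
Proof.
move=> a1; rewrite /Kc lerDl; have := q_lt2 a a1; have := powR_ge0 2 a => h1 h2.
apply: mulr_ge0; first by apply: mulr_ge0 => //; apply: mulr_ge0 => //; apply: exprn_ge0.
rewrite invr_ge0; lra.
Qed.

Section Prod.
Variable R : realType.

Lemma prod_le_sum (m : nat) (y al : 'I_m -> R) (a : R) :
  (forall j, 0 <= y j) -> (forall j, 0 <= al j) -> \sum_(j < m) al j = a -> 0 < a ->
  \prod_(j < m) y j `^ al j <= \sum_(j < m) y j `^ a.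
Proof.
move=> y0 al0 suma a0.
set Y := \sum_(j < m) y j `^ a.
have Y0 : 0 <= Y by apply: sumr_ge0 => j _; exact: powR_ge0.
have yY : forall j, y j `^ a <= Y.
  move=> j; rewrite /Y (bigD1 j) //= lerDl; apply: sumr_ge0 => i _; exact: powR_ge0.
have [Yz|Ynz] := eqVneq Y 0.
  have yz : forall j, y j = 0.
    move=> j; apply: (@powR_eq0_eq0 _ _ a); apply/eqP; rewrite eq_le powR_ge0 andbT.
    by rewrite -Yz yY.
  have [j0 hj0] : exists j0, al j0 != 0.
    apply/existsP; apply: contraT; rewrite negb_exists => /forallP h.
    move: a0; rewrite -suma big1 ?ltxx // => j _; exact/eqP/negPn/h.
  rewrite (bigD1 j0) //= yz powR0 // mul0r; exact: Y0.
have Ypos : 0 < Y by rewrite lt_neqAle eq_sym Ynz Y0.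
set M := Y `^ a^-1.
have Mpos : 0 < M by apply: powR_gt0.
have yM : forall j, y j <= M.
  move=> j; have := ge0_ler_powR (r := a^-1) _ _ _ (yY j).
  rewrite -powRrM mulfV ?gt_eqF // powRr1 //; apply; rewrite ?nnegrE ?invr_ge0 ?powR_ge0 //.
  exact: ltW.
apply: (@le_trans _ _ (\prod_(j < m) M `^ al j)).
  apply: ler_prod => j _; rewrite powR_ge0 /=.
  by apply: (ge0_ler_powR (al0 j)); rewrite ?nnegrE // ltW.
have e : M `^ (\sum_(j < m) al j) = \prod_(j < m) M `^ al j.
  apply: (big_morph (fun r => M `^ r)) => [r s|]; last exact: powRr0.
  by rewrite powRD // (gt_eqF Mpos) /= implybT.
rewrite -e suma /M -powRrM mulVf ?gt_eqF // powRr1 //.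
Qed.
End Prod.
Section Vit.
Variables (R : realType) (n : nat).
Local Notation T := (projT2 (Rsp R n)).
Local Notation mu := (lebn R n).
Local Open Scope ereal_scope.

Lemma bigU_meas (s : seq (set T)) (F : set T -> set T) :
  (forall P, P \in s -> measurable (F P)) -> measurable (\big[setU/set0]_(P <- s) F P).
Proof. by move=> h; rewrite big_seq; apply: bigsetU_measurable => P Ps; exact: h. Qed.

Lemma in_bigU (s : seq (set T)) (F : set T -> set T) x :
  (\big[setU/set0]_(P <- s) F P) x <-> exists2 P, P \in s & F P x.
Proof. rewrite -bigcup_seq; split => [[P /= Ps Fx]|[P Ps Fx]]; by exists P. Qed.

Lemma measure_bigU (s : seq (set T)) (F : set T -> set T) : uniq s ->
  (forall P, P \in s -> measurable (F P)) ->
  (forall P P', P \in s -> P' \in s -> P <> P' -> F P `&` F P' = set0) ->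
  mu (\big[setU/set0]_(P <- s) F P) = (\sum_(P <- s) mu (F P))%E.
Proof.
elim: s => [|P s IH] /=; first by rewrite !big_nil measure0.
move=> /andP[Pns us] hm hd.
rewrite !big_cons measureU.
- congr (_ + _)%E; apply: IH => // [Q Qs|Q Q' Qs Q's QQ']; [apply: hm | apply: hd] => //;
  by rewrite inE ?Qs ?Q's orbT.
- by apply: hm; rewrite inE eqxx.
- by apply: bigU_meas => Q Qs; apply: hm; rewrite inE Qs orbT.
- apply/seteqP; split => // x [FPx /in_bigU [Q Qs FQx]].
  have PQ : P <> Q by move=> PQ; move: Pns; rewrite PQ Qs.
  have Qs' : Q \in P :: s by rewrite inE Qs orbT.
  have h := hd P Q (mem_head _ _) Qs' PQ.
  have hx : (F P `&` F Q) x by split.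
  by rewrite h in hx.
Qed.

Lemma exists_max (s : seq (set T)) (f : set T -> \bar R) : s != [::] ->
  exists2 P0, P0 \in s & forall P, P \in s -> (f P <= f P0)%E.
Proof.
elim: s => [//|P s IH] _.
case: (eqVneq s [::]) => [->|sn].
  by exists P; rewrite ?mem_head // => Q; rewrite inE => /eqP ->.
have [P1 P1s h1] := IH sn.
case: (leP (f P) (f P1)) => hP.
  exists P1; first by rewrite inE P1s orbT.
  by move=> Q; rewrite inE => /orP[/eqP ->|/h1].
exists P; first exact: mem_head.
move=> Q; rewrite inE => /orP[/eqP ->//|/h1 hQ].
exact: le_trans hQ (ltW hP).
Qed.

Variables (E : set T -> set T) (g : T -> R).
Hypothesis mg : measurable_fun setT g.
Let G (x : T) : \bar R := (`|g x|%R)%:E.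

Lemma mG D : measurable D -> measurable_fun D (G : T -> \bar R).
Proof.
move=> mD; change (measurable_fun D (EFin \o (fun x => `|g x|%R))).
apply/measurable_EFinP; apply: measurableT_comp.
  exact: normr_measurable.
exact: measurable_funS mg.
Qed.

Lemma G0 x : (0 <= G x)%E.
Proof. by rewrite lee_fin. Qed.

Lemma vitali (lam : R) (s : seq (set T)) : (0 < lam)%R -> uniq s ->
  (forall P, P \in s -> exists a l, (0 < l)%R /\ P = box n a l) ->
  (forall P, P \in s -> [/\ measurable (E P), E P `<=` P &
       (((2:R)^-1)%:E * mu P <= mu (E P))%E]) ->
  (forall P P', P \in s -> P' \in s -> P <> P' -> E P `&` E P' = set0) ->
  (forall P, P \in s -> (lam%:E * mu P <= \int[mu]_(x in P) G x)%E) ->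
  (\sum_(P <- s) mu P <=
     (2 * 3 ^+ n.+1 / lam)%R%:E * \int[mu]_(x in \big[setU/set0]_(P <- s) P) G x)%E.
Proof.
move=> lam0; elim: {s}(size s) {-2}s (leqnn (size s)) => [|N IH] s.
  rewrite leqn0 => /nilP -> _ _ _ _ _; rewrite !big_nil; apply: mule_ge0.
    by rewrite lee_fin; apply: divr_ge0 => //; apply: ltW.
  by apply: integral_ge0 => x _; exact: G0.
move=> Ns us hbox hE hdisj hlam.
case: (eqVneq s [::]) => [-> | sn].
  rewrite !big_nil; apply: mule_ge0.
    by rewrite lee_fin; apply: divr_ge0 => //; apply: ltW.
  by apply: integral_ge0 => x _; exact: G0.
have [P0 P0s hmax] := exists_max s mu sn.
have [a0 [l0 [l00 P0E]]] := hbox P0 P0s.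
pose p := fun P : set T => `[< P `&` P0 !=set0 >].
set c := (2 * 3 ^+ n.+1 / lam)%R.
have c0 : (0 <= c)%R by apply: divr_ge0 => //; apply: ltW.
have mP : forall P, P \in s -> measurable P.
  by move=> P /hbox [a [l [_ ->]]]; exact: box_measurable.
have sideP : forall P, P \in s -> exists a t, [/\ (0 < t)%R, (t <= l0)%R & P = box n a t].
  move=> P Ps; have [a [t [t0 PE]]] := hbox P Ps; exists a, t; split => //.
  have := hmax P Ps; rewrite PE P0E => h.
  have : lebn R n (box n a t) <= lebn R n (box n a0 l0) by exact: h.
  rewrite (box_measure _ _ _ _ (ltW t0)) (box_measure _ _ _ _ (ltW l00)) lee_fin.
  by rewrite (ler_pXn2r (ltn0Sn n)) // nnegrE ltW.
have pP0 : p P0.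
  apply/asboolP; rewrite setIid P0E; have [x hx] := box_pt _ n a0 _ l00; by exists x.
rewrite (bigID p) /=.
have B1 : \sum_(P <- s | p P) mu P <= c%:E * \int[mu]_(x in P0) G x.
  apply: (@le_trans _ _ (\sum_(P <- s | p P) (2%:E * mu (E P)))).
    rewrite big_seq_cond [X in _ <= X]big_seq_cond; apply: lee_sum => P /andP[Ps _].
    have [_ _ h] := hE P Ps.
    rewrite -(lee_pmul2l (x := 2%:E)) // in h.
    by rewrite muleA -EFinM mulfV ?mul1e in h.
  rewrite -ge0_sume_distrr; last by move=> P _; apply: measure_ge0.
  rewrite -big_filter -measure_bigU; first last.
  - move=> P P'; rewrite !mem_filter => /andP[_ Ps] /andP[_ P's]; exact: hdisj.
  - by move=> P; rewrite mem_filter => /andP[_ /hE []].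
  - exact: filter_uniq.
  apply: (@le_trans _ _ (2%:E * mu (box n (fun i => a0 i - l0)%R (3 * l0)%R))).
    apply: lee_wpmul2l => //; apply: le_measure; rewrite ?inE.
    - by apply: bigU_meas => P; rewrite mem_filter => /andP[_ /hE []].
    - exact: box_measurable.
    move=> x /in_bigU [P]; rewrite mem_filter => /andP[pP Ps] EPx.
    have [a [t [t0 tl PE]]] := sideP P Ps.
    have [_ EPP _] := hE P Ps.
    have := EPP x EPx; rewrite PE; apply: box_sub3.
      by rewrite ltW.
    by move/asboolP: pP; rewrite setIC PE P0E.
  rewrite box_measure; last by rewrite mulr_ge0 // ltW.
  apply: (@le_trans _ _ (c%:E * (lam%:E * mu P0))); last first.
    apply: lee_wpmul2l; first by rewrite lee_fin.
    exact: hlam.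
  rewrite P0E (box_measure _ _ _ _ (ltW l00)) -!EFinM lee_fin le_eqVlt; apply/orP; left; apply/eqP.
  rewrite /c exprMn; field; exact: lt0r_neq0.
set s2 := [seq P <- s | ~~ p P].
have s2N : (size s2 <= N)%N.
  rewrite size_filter; have := count_predC p s.
  have -> : count (fun P => ~~ p P) s = count (predC p) s by [].
  have : (0 < count p s)%N by rewrite -has_count; apply/hasP; exists P0.
  move: Ns; lia.
have IH2 := IH s2 s2N.
have {}IH2 : \sum_(P <- s | ~~ p P) mu P <= c%:E * \int[mu]_(x in \big[setU/set0]_(P <- s2) P) G x.
  have -> : \sum_(P <- s | ~~ p P) mu P = \sum_(P <- s2) mu P by rewrite big_filter.
  apply: IH2.
  - exact: filter_uniq.
  - by move=> P; rewrite mem_filter => /andP[_ /hbox].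
  - by move=> P; rewrite mem_filter => /andP[_ /hE].
  - move=> P P'; rewrite !mem_filter => /andP[_ Ps] /andP[_ P's]; exact: hdisj.
  - by move=> P; rewrite mem_filter => /andP[_ /hlam].
have mU2 : measurable (\big[setU/set0]_(P <- s2) P).
  by apply: bigU_meas => P; rewrite mem_filter => /andP[_ /mP].
have mP0 : measurable P0 by exact: mP.
apply: le_trans (leeD B1 IH2) _.
rewrite -ge0_muleDr; try by apply: integral_ge0 => x _; exact: G0.
rewrite -ge0_integral_setU //; first last.
- rewrite disj_set2E; apply/eqP/seteqP; split => // x [P0x /in_bigU [P]].
  rewrite mem_filter => /andP[/= /asboolP pP _] Px.
  by apply: pP; exists x.
- by move=> x _; exact: G0.
- by apply: mG; exact: measurableU.
apply: lee_wpmul2l; first by rewrite lee_fin.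
apply: ge0_subset_integral => //.
- exact: measurableU.
- by apply: bigU_meas.
- by apply: mG; apply: bigU_meas.
- by move=> x _; exact: G0.
move=> x [P0x|/in_bigU [P]].
  by apply/in_bigU; exists P0.
rewrite mem_filter => /andP[_ Ps] Px; by apply/in_bigU; exists P.
Qed.

Lemma carleson (Q : set T) (s : seq (set T)) : measurable Q -> uniq s ->
  (forall P, P \in s -> P `<=` Q) ->
  (forall P, P \in s -> [/\ measurable (E P), E P `<=` P &
       (((2:R)^-1)%:E * mu P <= mu (E P))%E]) ->
  (forall P P', P \in s -> P' \in s -> P <> P' -> E P `&` E P' = set0) ->
  \sum_(P <- s) mu P <= 2%:E * mu Q.
Proof.
move=> mQ us hsub hE hdisj.
apply: (@le_trans _ _ (\sum_(P <- s) (2%:E * mu (E P)))).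
  rewrite big_seq [X in _ <= X]big_seq; apply: lee_sum => P Ps.
  have [_ _ h] := hE P Ps.
  rewrite -(lee_pmul2l (x := 2%:E)) // in h.
  by rewrite muleA -EFinM mulfV ?mul1e in h.
rewrite -ge0_sume_distrr; last by move=> P _; apply: measure_ge0.
rewrite -measure_bigU //; last by move=> P /hE [].
apply: lee_wpmul2l => //; apply: le_measure; rewrite ?inE //.
  by apply: bigU_meas => P /hE [].
move=> x /in_bigU [P Ps EPx]; have [_ h _] := hE P Ps.
exact: (hsub P Ps) (h x EPx).
Qed.

Lemma box_fin P : (exists b l, (0 < l)%R /\ P = box n b l) ->
  mu P = (fine (mu P))%:E /\ (0 < fine (mu P))%R.
Proof.
move=> [b [l [l0 ->]]]; rewrite (box_measure _ _ _ _ (ltW l0)) /=; split => //.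
exact: exprn_gt0.
Qed.

Lemma int_fin (Q P : set T) : measurable Q -> measurable P -> P `<=` Q ->
  \int[mu]_(x in Q) G x < +oo ->
  \int[mu]_(x in P) G x = (fine (\int[mu]_(x in P) G x))%:E /\
  (0 <= fine (\int[mu]_(x in P) G x) <= fine (\int[mu]_(x in Q) G x))%R.
Proof.
move=> mQ mP PQ Qfin.
have h0 : 0 <= \int[mu]_(x in P) G x by apply: integral_ge0 => x _; exact: G0.
have hQ0 : 0 <= \int[mu]_(x in Q) G x by apply: integral_ge0 => x _; exact: G0.
have hle : \int[mu]_(x in P) G x <= \int[mu]_(x in Q) G x.
  apply: ge0_subset_integral => //; first exact: mG.
  by move=> x _; exact: G0.
have fP : \int[mu]_(x in P) G x \is a fin_num.
  by rewrite ge0_fin_numE //; apply: le_lt_trans hle Qfin.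
have fQ : \int[mu]_(x in Q) G x \is a fin_num by rewrite ge0_fin_numE.
split; first by rewrite fineK.
apply/andP; split; first exact: fine_ge0.
by rewrite -lee_fin !fineK.
Qed.


Let avg (P : set T) : R := (fine (\int[mu]_(x in P) G x) / fine (mu P))%R.

Lemma avg_ge0 P : (0 <= avg P)%R.
Proof.
apply: divr_ge0; apply: fine_ge0; last exact: measure_ge0.
by apply: integral_ge0 => x _; exact: G0.
Qed.

Lemma single (Q : set T) (aQ : nat -> R) (lQ : R) (s : seq (set T)) (a : R) :
  (0 < lQ)%R -> Q = box n aQ lQ -> \int[mu]_(x in Q) G x < +oo ->
  (0 < a < 1)%R -> uniq s ->
  (forall P, P \in s -> exists b l, (0 < l)%R /\ P = box n b l) ->
  (forall P, P \in s -> P `<=` Q) ->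
  (forall P, P \in s -> [/\ measurable (E P), E P `<=` P &
       (((2:R)^-1)%:E * mu P <= mu (E P))%E]) ->
  (forall P P', P \in s -> P' \in s -> P <> P' -> E P `&` E P' = set0) ->
  (\sum_(P <- s) (avg P / avg Q) `^ a * fine (mu P) <= Kc n a * fine (mu Q))%R.
Proof.
move=> lQ0 QE Qfin /andP[a0 a1] us hbox hsub hE hdisj.
have mQ : measurable Q by rewrite QE; exact: box_measurable.
have mPs : forall P, P \in s -> measurable P.
  by move=> P /hbox [b [l [_ ->]]]; exact: box_measurable.
have [muQE VQ0] : mu Q = (fine (mu Q))%:E /\ (0 < fine (mu Q))%R.
  by apply: box_fin; exists aQ, lQ.
have [IQE /andP[IQ0 _]] := int_fin _ _ mQ mQ (@subset_refl _ Q) Qfin.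
set VQ := fine (mu Q) in muQE VQ0 *.
set IQ := fine (\int[mu]_(x in Q) G x) in IQE IQ0 *.
have K0 : (0 <= Kc n a)%R by have := Kc_ge2 R n a a1; lra.
have q0 : (0 <= 2 `^ a)%R by apply: powR_ge0.
have q2 := q_lt2 a a1.
have [l00|l0pos] := eqVneq (avg Q) 0%R.
  rewrite l00 big1; first by apply: mulr_ge0 => //; apply: ltW.
  move=> P _.
  by rewrite invr0 mulr0 powR0 ?mul0r // gt_eqF.
have l0 : (0 < avg Q)%R by rewrite lt_neqAle eq_sym l0pos avg_ge0.
set l := avg Q in l0pos l0 *.
pose r P := (avg P / l)%R.
have r0 : forall P, (0 <= r P)%R by move=> P; apply: divr_ge0; [exact: avg_ge0| exact: ltW].
have [N hN] := pow2_bound _ (\sum_(P <- s) r P)%R.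
have rN : forall P, P \in s -> (r P <= 2 ^+ N)%R.
  by move=> P Ps; apply: le_trans hN; apply: le_sum_seq.
set q := (2 `^ a)%R in q0 q2 *.
pose V P := fine (mu P).
have V0 : forall P, (0 <= V P)%R by move=> P; apply: fine_ge0; exact: measure_ge0.
have S1 : (\sum_(P <- s) (avg P / l) `^ a * fine (mu P) <=
   \sum_(P <- s) (1 + \sum_(k < N) q ^+ k.+1 * ((2 ^+ k < r P)%R)%:R) * V P)%R.
  rewrite big_seq [X in (_ <= X)%R]big_seq; apply: ler_sum => P Ps.
  apply: ler_wpM2r; first exact: V0.
  exact: (pw _ _ _ _ a0 (r0 P) (rN P Ps)).
apply: (le_trans S1).
have -> : (\sum_(P <- s) (1 + \sum_(k < N) q ^+ k.+1 * ((2 ^+ k < r P)%R)%:R) * V P =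
   \sum_(P <- s) V P + \sum_(k < N) q ^+ k.+1 * \sum_(P <- s) ((2 ^+ k < r P)%R)%:R * V P)%R.
  transitivity (\sum_(P <- s) (V P + \sum_(k < N) q ^+ k.+1 * (((2 ^+ k < r P)%R)%:R * V P)))%R.
    apply: eq_bigr => P _; rewrite mulrDl mul1r big_distrl /=; congr (_ + _)%R.
    by apply: eq_bigr => k _; rewrite mulrA.
  rewrite big_split /=; congr (_ + _)%R; rewrite exchange_big /=.
  by apply: eq_bigr => k _; rewrite big_distrr.
have C1 : (\sum_(P <- s) V P <= 2 * VQ)%R.
  have h := carleson _ _ mQ us hsub hE hdisj.
  have e : \sum_(P <- s) mu P = (\sum_(P <- s) V P)%R%:E.
    rewrite -sumEFin; apply: eq_big_seq => P Ps.
    by have [] := box_fin _ (hbox P Ps).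
  by rewrite e muQE -EFinM lee_fin in h.
have C2 : forall k, (\sum_(P <- s) ((2 ^+ k < r P)%R)%:R * V P <=
                      2 * 3 ^+ n.+1 * VQ / 2 ^+ k)%R.
  move=> k.
  have -> : (\sum_(P <- s) ((2 ^+ k < r P)%R)%:R * V P =
             \sum_(P <- [seq P <- s | (2 ^+ k < r P)%R]) V P)%R.
    rewrite big_filter [in RHS]big_mkcond /=; apply: eq_bigr => P _.
    by case: ifP => _; rewrite ?mul1r ?mul0r.
  set sk := [seq P <- s | (2 ^+ k < r P)%R].
  have lam0 : (0 < 2 ^+ k * l)%R by apply: mulr_gt0 => //; apply: exprn_gt0.
  have h := vitali _ _ lam0 (filter_uniq _ us)
    (fun P Pk => hbox P (mem_subseq (filter_subseq _ _) Pk))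
    (fun P Pk => hE P (mem_subseq (filter_subseq _ _) Pk))
    (fun P P' Pk P'k => hdisj P P' (mem_subseq (filter_subseq _ _) Pk) (mem_subseq (filter_subseq _ _) P'k)).
  have hl : forall P, P \in sk -> (2 ^+ k * l)%:E * mu P <= \int[mu]_(x in P) G x.
    move=> P; rewrite mem_filter => /andP[hk Ps].
    have [mPE VP0] := box_fin _ (hbox P Ps).
    have [IPE _] := int_fin _ _ mQ (mPs P Ps) (hsub P Ps) Qfin.
    rewrite mPE IPE -EFinM lee_fin.
    rewrite /r ltr_pdivlMr // /avg ltr_pdivlMr // in hk.
    exact: ltW.
  have h' := h (fun P => (2 ^+ k < r P)%R) hl.
  have e : \sum_(P <- sk) mu P = (\sum_(P <- sk) V P)%R%:E.
    rewrite -sumEFin; apply: eq_big_seq => P; rewrite mem_filter => /andP[_ Ps].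
    by have [] := box_fin _ (hbox P Ps).
  have hU : \int[mu]_(x in \big[setU/set0]_(P <- sk) P) G x <= \int[mu]_(x in Q) G x.
    apply: ge0_subset_integral => //.
    - by apply: bigU_meas => P; rewrite mem_filter => /andP[_ /mPs].
    - exact: mG.
    - by move=> x _; exact: G0.
    - move=> x /in_bigU [P]; rewrite mem_filter => /andP[_ Ps] Px.
      exact: hsub P Ps x Px.
  have := le_trans h' (lee_wpmul2l _ hU).
  rewrite e IQE -EFinM lee_fin => H.
  have /H {}H : (0 <= (2 * 3 ^+ n.+1 / (2 ^+ k * l))%:E).
    rewrite lee_fin; apply: divr_ge0; last exact: ltW.
    by apply: mulr_ge0 => //; apply: exprn_ge0.
  rewrite lee_fin in H; apply: le_trans H _.
  have lE : l = (IQ / VQ)%R by [].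
  have IQ0' : IQ != 0%R by apply: contra l0pos; rewrite lE => /eqP ->; rewrite mul0r.
  rewrite lE le_eqVlt; apply/orP; left; apply/eqP.
  field; apply/and3P; split; [exact: expf_neq0 | exact: lt0r_neq0 | exact: IQ0'].
have C3 : (\sum_(k < N) q ^+ k.+1 * \sum_(P <- s) ((2 ^+ k < r P)%R)%:R * V P <=
     \sum_(k < N) q ^+ k.+1 * (2 * 3 ^+ n.+1 * VQ / 2 ^+ k))%R.
  apply: ler_sum => k _; apply: ler_wpM2l; [exact: exprn_ge0 | exact: C2].
have C4 : (\sum_(k < N) q ^+ k.+1 * (2 * 3 ^+ n.+1 * VQ / 2 ^+ k) =
     2 * 3 ^+ n.+1 * q * VQ * \sum_(k < N) (q / 2) ^+ k)%R.
  rewrite big_distrr; apply: eq_bigr => k _ /=; rewrite exprS expr_div_n.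
  by field; apply: expf_neq0.
have C5 := geo _ (q / 2)%R N.
have /C5 {}C5 : (0 <= q / 2 < 1)%R by apply/andP; split; lra.
rewrite C4 in C3.
have C6 : (2 * 3 ^+ n.+1 * q * VQ * \sum_(k < N) (q / 2) ^+ k <=
    2 * 3 ^+ n.+1 * q * VQ * (1 - q / 2)^-1)%R.
  apply: ler_wpM2l => //; apply: mulr_ge0; last exact: ltW.
  by apply: mulr_ge0 => //; apply: mulr_ge0 => //; apply: exprn_ge0.
rewrite /Kc -/q.
lra.
Qed.

End Vit.

Lemma abs_le_sum (R : realType) (f : nat -> R) n i : (i <= n)%N ->
  `|f i| <= \sum_(k < n.+1) `|f k|.
Proof.
move=> hi; have hi' : (i < n.+1)%N by [].
rewrite (bigD1 (Ordinal hi')) //= lerDl; apply: sumr_ge0 => k _; exact: normr_ge0.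
Qed.

Lemma loc_fin (R : realType) n (g : Rd R n.+1 -> R) (aQ : nat -> R) (lQ : R) :
  0 < lQ -> loc_integrable n.+1 g ->
  (\int[lebn R n]_(x in box n aQ lQ) (`|g x|)%:E < +oo)%E.
Proof.
move=> lQ0 [mg hint].
set r := \sum_(i < n.+1) `|aQ i| + lQ + 1.
have sr : 0 <= \sum_(i < n.+1) `|aQ i| by apply: sumr_ge0 => i _; exact: normr_ge0.
have r0 : 0 < r by rewrite /r; lra.
have := hint r r0; rewrite /= => hi.
have sub : box n aQ lQ `<=` box n (fun=> - r) (2 * r).
  apply: box_sub => i hi2; have := abs_le_sum _ aQ _ _ hi2.
  have := ler_norm (aQ i); have := ler_norm (- aQ i).
  rewrite normrN => h1 h2 h3; split; rewrite /r; lra.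
have := integrableS (box_measurable _ _ _ _) (box_measurable _ _ _ _) sub hi.
by move=> /integrableP [_ h].
Qed.

Theorem lemma3p2 (R : realType) (d m : nat) (alpha : 'I_m -> R) :
  (0 < d)%N ->
  (forall j, 0 <= alpha j < 1) ->
  \sum_(j < m) alpha j < 1 ->
  exists C : R, 0 < C /\
    forall (shift : nat -> R), admissible_shift d shift ->
    forall S : set (set (Rd R d)), S `<=` dyadic_grid d shift -> sparse d S ->
    forall g : 'I_m -> Rd R d -> R, (forall j, loc_integrable d (g j)) ->
    forall Q : set (Rd R d), dyadic_grid d shift Q ->
      (\esum_(Q' in [set Q' | S Q' /\ Q' `<=` Q])
          ((\prod_(j < m) avg1 d (g j) Q' `^ alpha j) * fine (leb R d Q'))%:E
        <= (C * ((\prod_(j < m) avg1 d (g j) Q `^ alpha j) * fine (leb R d Q)))%:E)%E.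
Proof.
move=> d0 hal hsum.
set a := \sum_(j < m) alpha j.
have al0 : forall j, 0 <= alpha j by move=> j; case/andP: (hal j).
have a0 : 0 <= a by apply: sumr_ge0 => j _.
have a1 : a < 1 := hsum.
have K2 := Kc_ge2 R (d.-1) a a1.
exists ((m.+1)%:R * Kc (d.-1) a); split.
  by apply: mulr_gt0; [rewrite ltr0n | lra].
case: d d0 K2 => // n _ K2.
move=> shift _ S hS [E [hE hdisj]] g hg Q [jQ [kQ QE]].
rewrite /dcube /= in QE.
set lQ := (2:R) ^ (- jQ) in QE.
set aQ := (fun i => lQ * (shift i + (kQ i)%:~R)) in QE.
have lQ0 : 0 < lQ by apply: exprz_gt0.
have mg : forall j, measurable_fun setT (g j) by move=> j; case: (hg j).
have Qfin : forall j, (\int[lebn R n]_(x in Q) (`|g j x|)%:E < +oo)%E.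
  by move=> j; rewrite QE; apply: loc_fin.
have mQ : measurable Q by rewrite QE; exact: box_measurable.
apply: ub_ereal_sup => _ [X [finX XD] <-].
rewrite fsbig_finite //=.
set s := finmap.enum_fset (fset_set X).
have us : uniq s := finmap.fset_uniq _.
have sX : forall P, P \in s -> S P /\ P `<=` Q.
  move=> P Ps; have : P \in X by rewrite -(in_fset_set finX P); exact: Ps.
  by rewrite inE => /XD.
rewrite sumEFin lee_fin.
have hbox : forall P, P \in s -> exists b l, 0 < l /\ P = box n b l.
  move=> P /sX [/hS [j [k ->]] _].
  by exists (fun i => (2:R) ^ (- j) * (shift i + (k i)%:~R)), ((2:R) ^ (- j)); split => //; apply: exprz_gt0.
have hsub : forall P, P \in s -> P `<=` Q by move=> P /sX [].
have hE' : forall P, P \in s -> [/\ measurable (E P), E P `<=` P &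
    ((2^-1)%:E * lebn R n P <= lebn R n (E P))%E].
  by move=> P /sX [/hE].
have hdisj' : forall P P', P \in s -> P' \in s -> P <> P' -> E P `&` E P' = set0.
  by move=> P P' /sX [SP _] /sX [SP' _]; exact: hdisj.
have [muQE VQ0] : lebn R n Q = (fine (lebn R n Q))%:E /\ 0 < fine (lebn R n Q).
  by apply: box_fin; exists aQ, lQ.
have sumV : (\sum_(P <- s) fine (lebn R n P) <= 2 * fine (lebn R n Q)).
  have h := carleson _ _ _ _ _ mQ us hsub hE' hdisj'.
  have e : (\sum_(P <- s) lebn R n P = (\sum_(P <- s) fine (lebn R n P))%:E)%E.
    rewrite -sumEFin; apply: eq_big_seq => P Ps.
    by have [] := box_fin _ _ _ (hbox P Ps).
  by rewrite e muQE -EFinM lee_fin in h.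
change (leb R n.+1) with (lebn R n).
set PQ := \prod_(j < m) avg1 n.+1 (g j) Q `^ alpha j.
have PQ0 : 0 <= PQ by apply: prodr_ge0 => j _; exact: powR_ge0.
set VQ := fine (lebn R n Q) in muQE VQ0 sumV *.
have V0 : forall P, 0 <= fine (lebn R n P) by move=> P; apply: fine_ge0; exact: measure_ge0.
have m1 : 1 <= (m.+1)%:R :> R by rewrite ler1n.
case: (eqVneq a 0) => [az | anz].
  have alz : forall j, alpha j = 0.
    by move=> j; apply: (psumr_eq0P (fun j _ => al0 j) az).
  have e1 : forall P, \prod_(j < m) avg1 n.+1 (g j) P `^ alpha j = 1.
    by move=> P; apply: big1 => j _; rewrite alz powRr0.
  rewrite /PQ e1 mul1r.
  under eq_bigr => P _ do rewrite e1 mul1r.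
  apply: le_trans sumV _; apply: ler_wpM2r; first exact: ltW.
  nra.
have apos : 0 < a by rewrite lt_neqAle eq_sym anz a0.
pose y j P := avg1 n.+1 (g j) P / avg1 n.+1 (g j) Q.
have avg0 : forall j P, 0 <= avg1 n.+1 (g j) P.
  move=> j P; apply: divr_ge0; apply: fine_ge0; last exact: measure_ge0.
  by apply: integral_ge0 => x _; rewrite lee_fin.
have y0 : forall j P, 0 <= y j P by move=> j P; apply: divr_ge0.
have key : forall P, P \in s ->
    \prod_(j < m) avg1 n.+1 (g j) P `^ alpha j = (\prod_(j < m) y j P `^ alpha j) * PQ.
  move=> P Ps; rewrite /PQ -big_split /=; apply: eq_bigr => j _.
  have mP : measurable P by have [b [l [_ ->]]] := hbox P Ps; exact: box_measurable.
  have [_ /andP[IP0 IPQ]] := int_fin _ _ _ (mg j) _ _ mQ mP (hsub P Ps) (Qfin j).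
  case: (eqVneq (avg1 n.+1 (g j) Q) 0) => [hz|hnz].
    have hPz : avg1 n.+1 (g j) P = 0.
      move: hz; rewrite /avg1 /= => /eqP; rewrite mulf_eq0 invr_eq0 (gt_eqF VQ0) orbF.
      move=> /eqP hz; rewrite (_ : fine _ = 0) ?mul0r //.
      by apply/eqP; rewrite eq_le IP0 andbT; rewrite hz in IPQ.
    rewrite /y hz hPz invr0 mulr0.
    case: (eqVneq (alpha j) 0) => [->|an]; first by rewrite !powRr0 mulr1.
    by rewrite powR0 // mul0r.
  by rewrite -powRM // /y divfK.
have step : forall P, P \in s ->
    (\prod_(j < m) avg1 n.+1 (g j) P `^ alpha j) * fine (lebn R n P) <=
    PQ * \sum_(j < m) (y j P `^ a * fine (lebn R n P)).
  move=> P Ps; rewrite key // -big_distrl /= mulrA; apply: ler_wpM2r => //.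
  rewrite mulrC; apply: ler_wpM2l => //; apply: prod_le_sum => //.
have SJ : forall j, \sum_(P <- s) y j P `^ a * fine (lebn R n P) <= Kc n a * VQ.
  move=> j; have aa : 0 < a < 1 by rewrite apos a1.
  exact: (single _ _ _ _ (mg j) _ _ _ _ _ lQ0 QE (Qfin j) aa us hbox hsub hE' hdisj').
apply: (@le_trans _ _ (\sum_(P <- s) PQ * \sum_(j < m) (y j P `^ a * fine (lebn R n P)))).
  by rewrite big_seq [X in _ <= X]big_seq; apply: ler_sum => P Ps; apply: step.
rewrite -big_distrr /= exchange_big /=.
apply: (@le_trans _ _ (PQ * \sum_(j < m) (Kc n a * VQ))).
  by apply: ler_wpM2l => //; apply: ler_sum => j _; exact: SJ.
rewrite sumr_const card_ord -mulr_natr.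
have KV : 0 <= Kc n a * VQ by apply: mulr_ge0; [lra | exact: ltW].
have : m%:R <= (m.+1)%:R :> R by rewrite ler_nat.
nra.
Qed.
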